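(* There is $n_0$ such that for every $n>n_0$ and every $H\in\{P_4, 2K_2\}$, $$\mathrm{IR}(H, K_{1,n}) \leq n + 2n\log^{-1/4} n.$$
   Context: All graphs are finite and simple. $P_4$ is the path on $4$ vertices, $2K_2$ is the disjoint union of two edges, $K_{1,n}$ is the star with $n$ edges. For graphs $F$, $H$, $G$, write $F \overset{\text{ind}}{\longrightarrow} (H,G)$ if for every coloring of the edges of $F$ with red and blue there is either a red induced copy of $H$ (a vertex set $S\subseteq V(F)$ with $F[S]\cong H$ and all edges of $F[S]$ red) or a blue induced copy of $G$ (defined analogously with blue). The induced Ramsey number $\mathrm{IR}(H,G)$ is the smallest number of vertices of a graph $F$ with $F \overset{\text{ind}}{\longrightarrow} (H,G)$. *)

(* Defs.v *)
From mathcomp Require Import all_boot.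
From Stdlib Require Import Reals.
Set Implicit Arguments. Unset Strict Implicit. Unset Printing Implicit Defensive.

Definition is_graph (V : finType) (e : rel V) : Prop :=
  symmetric e /\ irreflexive e.

(* A red/blue edge colouring of F = (V,e): a symmetric map c; c u v = true means
   the edge uv is red, false means blue (values on non-edges are irrelevant). *)
Definition is_coloring (V : finType) (c : V -> V -> bool) : Prop :=
  forall u v, c u v = c v u.

Definition mono_induced_copy (V : finType) (e : rel V) (c : V -> V -> bool)
  (col : bool) (W : finType) (h : rel W) : Prop :=
  exists f : W -> V, injective f /\
    (forall x y, e (f x) (f y) = h x y) /\
    (forall x y, h x y -> c (f x) (f y) = col).

Definition ind_arrow (V : finType) (e : rel V)
  (W1 : finType) (h : rel W1) (W2 : finType) (g : rel W2) : Prop :=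
  forall c : V -> V -> bool, is_coloring c ->
    mono_induced_copy e c true h \/ mono_induced_copy e c false g.

(* IR(H,G) <= x : some graph F with at most x vertices satisfies F -ind-> (H,G).
   (Unfolding of "the minimum number of vertices of such F is <= x".) *)
Definition IR_le (W1 : finType) (h : rel W1) (W2 : finType) (g : rel W2)
  (x : R) : Prop :=
  exists (V : finType) (e : rel V),
    is_graph e /\ (INR #|V| <= x)%R /\ ind_arrow e h g.

Definition P4 : rel 'I_4 :=
  fun i j => (i.+1 == j :> nat) || (j.+1 == i :> nat).

(* 2K_2 : edges {0,1} and {2,3}. *)
Definition twoK2 : rel 'I_4 :=
  fun i j => (i != j) && ((i./2 == j./2 :> nat)).

Definition K1n (n : nat) : rel 'I_n.+1 :=
  fun i j => (i == 0 :> nat) != (j == 0 :> nat).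

Definition star_bound (n : nat) : R :=
  (INR n + 2 * INR n * Rpower (ln (INR n)) (- (1/4)))%R.
Arguments K1n n : clear implicits.

(* Main.v *)
Require Import Defs.
From mathcomp Require Import all_boot.
From Stdlib Require Import Reals.
From Stdlib Require Import Lra.
Set Implicit Arguments. Unset Strict Implicit. Unset Printing Implicit Defensive.

Lemma INR_expn a k : INR (expn a k) = pow (INR a) k.
Proof.
elim: k => [|k IH]; first by rewrite expn0.
by rewrite expnS mulnE mult_INR IH.
Qed.

Lemma INR_leq a b : a <= b -> (INR a <= INR b)%R.
Proof. by move/leP; apply: le_INR. Qed.

Lemma INR_ltn a b : a < b -> (INR a < INR b)%R.
Proof. by move/ltP; apply: lt_INR. Qed.

Lemma ln2_lt1 : (ln 2 < 1)%R.
Proof.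
have h : (2 < exp 1)%R.
  have := exp_ineq1 1 ltac:(lra). lra.
rewrite -[X in (_ < X)%R]ln_exp; apply: ln_increasing; lra.
Qed.

Lemma real_bound n P M : 2 <= n -> n < expn 2 (expn P 4) -> 0 < P -> n <= M ->
  P * (M - n) <= 2 * n -> (INR M <= star_bound n)%R.
Proof.
move=> hn2 hhi hP hnM hPM.
have hn : (2 <= INR n)%R by have := INR_leq hn2.
have hPr : (1 <= INR P)%R by have := INR_leq hP.
set L := ln (INR n).
have hL0 : (0 < L)%R.
  rewrite -ln_1; apply: ln_increasing; lra.
have hLP : (L <= INR P ^ 4)%R.
  have h1 : (INR n < 2 ^ (expn P 4))%R by have := INR_ltn hhi; rewrite INR_expn.
  have h2 : (L < INR (expn P 4) * ln 2)%R.
    rewrite -ln_pow; last lra.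
    by apply: ln_increasing => //; lra.
  have h3 : (0 <= INR (expn P 4))%R by apply: pos_INR.
  rewrite INR_expn in h2 h3.
  have := ln2_lt1; have : (0 < ln 2)%R by rewrite -ln_1; apply: ln_increasing; lra.
  nra.
have hR : (/ INR P <= Rpower L (- (1 / 4)))%R.
  rewrite /Rpower -(exp_ln (INR P)); last lra.
  rewrite -exp_Ropp.
  have : (ln L <= INR 4 * ln (INR P))%R.
    rewrite -ln_pow; last lra.
    case: (Rle_lt_or_eq_dec _ _ hLP) => h; last by rewrite h; lra.
    by apply: Rlt_le; apply: ln_increasing.
  move=> h; case: (Rle_lt_or_eq_dec (- ln (INR P)) (- (1 / 4) * ln L)) => [|h'|h'].
  - simpl in h; lra.
  - by apply: Rlt_le; apply: exp_increasing.
  - by rewrite h'; lra.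
have hMn : (INR M = INR n + INR (M - n))%R by rewrite -plus_INR -addnE subnKC.
have hPM' : (INR P * INR (M - n) <= 2 * INR n)%R.
  have := INR_leq hPM; rewrite mulnE !mult_INR; simpl; lra.
rewrite /star_bound -/L hMn.
have hR2 := Rmult_le_compat_l (2 * INR n) _ _ ltac:(lra) hR.
have : (INR (M - n) <= 2 * INR n * / INR P)%R.
  apply: (Rmult_le_reg_l (INR P)); first lra.
  by field_simplify; lra.
lra.
Qed.

From mathcomp Require Import all_boot zify.

Definition be (N m : nat) (adj : 'I_N -> 'I_m -> bool) : rel ('I_N + 'I_m)%type :=
  fun u v => match u, v with
  | inl i, inr c => adj i c
  | inr c, inl i => adj i c
  | _, _ => false end.

Lemma be_graph N m (adj : 'I_N -> 'I_m -> bool) : is_graph (be adj).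
Proof. by split; [case=> [i|c] [j|d] | case]. Qed.

Lemma star_copy N m (adj : 'I_N -> 'I_m -> bool) c (col : _ -> _ -> bool) n :
  is_coloring col ->
  n <= #|[set i | adj i c && ~~ col (inl i) (inr c)]| ->
  mono_induced_copy (be adj) col false (K1n n).
Proof.
move=> hcol; set B := [set i | _] => h.
pose f (x : 'I_n.+1) : ('I_N + 'I_m)%type :=
  match unlift ord0 x with Some j => inl (enum_val (widen_ord h j)) | None => inr c end.
have fE x : f x = match unlift ord0 x with Some j => inl (enum_val (widen_ord h j)) | None => inr c end by [].
have inB j : enum_val (widen_ord h j) \in B by apply: enum_valP.
exists f; split; [|split].
- move=> x y; rewrite !fE.
  case: (unliftP ord0 x) => [j|] ->; case: (unliftP ord0 y) => [k|] -> //=.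
  by case=> /enum_val_inj /(congr1 val) /= /val_inj ->.
- move=> x y; rewrite !fE /K1n.
  case: (unliftP ord0 x) => [j|] ->; case: (unliftP ord0 y) => [k|] -> //=.
  all: try by have := inB k; rewrite inE => /andP[-> _].
  all: try by have := inB j; rewrite inE => /andP[-> _].
- move=> x y; rewrite !fE /K1n.
  case: (unliftP ord0 x) => [j|] ->; case: (unliftP ord0 y) => [k|] -> //=.
  all: try by move=> _; rewrite hcol; have := inB k; rewrite inE => /andP[_ /negbTE].
  all: try by move=> _; have := inB j; rewrite inE => /andP[_ /negbTE].
Qed.

Lemma card_sumB (T : finType) (A : {set T}) : #|A| = \sum_(x : T) (x \in A).
Proof. by rewrite -sum1_card big_mkcond /=; apply: eq_bigr => x _; case: (x \in A). Qed.

Lemma red_large N m (adj : 'I_N -> 'I_m -> bool) n r (col : ('I_N + 'I_m)%type -> ('I_N + 'I_m)%type -> bool) c :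
  n + r - 1 <= #|[set i | adj i c]| ->
  #|[set i | adj i c && ~~ col (inl i) (inr c)]| < n ->
  r <= #|[set i | adj i c && col (inl i) (inr c)]|.
Proof.
move=> hd hb.
have := cardsID [set i | col (inl i) (inr c)] [set i | adj i c].
have -> : [set i | adj i c] :&: [set i | col (inl i) (inr c)] = [set i | adj i c && col (inl i) (inr c)].
  by apply/setP => i; rewrite !inE.
have -> : [set i | adj i c] :\: [set i | col (inl i) (inr c)] = [set i | adj i c && ~~ col (inl i) (inr c)].
  by apply/setP => i; rewrite !inE andbC.
lia.
Qed.

Lemma arrow_P4 N m (adj : 'I_N -> 'I_m -> bool) n r K :
  0 < r ->
  (forall c, n + r - 1 <= #|[set i | adj i c]|) ->
  (forall S : {set 'I_m}, K <= #|S| -> #|[set i | [forall c in S, adj i c]]| < r) ->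
  N * K.-1 < m * r ->
  ind_arrow (be adj) P4 (K1n n).
Proof.
move=> r0 hdeg hS hNK col hcol.
pose R (c : 'I_m) := [set i : 'I_N | adj i c && col (inl i) (inr c)].
case: (boolP [exists c, n <= #|[set i | adj i c && ~~ col (inl i) (inr c)]|]) => [/existsP[c hc]|hno].
  by right; exact: star_copy hcol hc.
have hR c : r <= #|R c|.
  apply: red_large (hdeg c) _; move/existsPn: hno => /(_ c); by rewrite ltnNge.
case: (boolP [exists c1, exists c2, exists P, exists Q,
   [&& c1 != c2, P \in R c1, Q \in R c1, Q \in R c2 & ~~ adj P c2]]) => [H|H].
  left; move: H => /existsP[c1 /existsP[c2 /existsP[P /existsP[Q]]]].
  rewrite !inE => /and5P[hne /andP[aP1 cP1] /andP[aQ1 cQ1] /andP[aQ2 cQ2] nP2].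
  pose f (x : 'I_4) : ('I_N + 'I_m)%type :=
    match val x with 0 => inl P | 1 => inr c1 | 2 => inl Q | _ => inr c2 end.
  have hPQ : P != Q by apply: contraNneq nP2 => ->.
  have i1 : injective f.
    move=> [[|[|[|[|x]]]] hx] [[|[|[|[|y]]]] hy] //=.
    all: try (move=> H; first [by apply: val_inj | by case: H | by case: H => H; subst; rewrite ?eqxx in hne hPQ]).
  have i2 : forall x y, be adj (f x) (f y) = P4 x y.
    move=> [[|[|[|[|x]]]] hx] [[|[|[|[|y]]]] hy] //=.
    all: try by rewrite /f /= ?aP1 ?aQ1 ?aQ2 ?(negbTE nP2).
  have i3 : forall x y, P4 x y -> col (f x) (f y) = true.
    move=> [[|[|[|[|x]]]] hx] [[|[|[|[|y]]]] hy] //= _.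
    all: try (first [by rewrite /f /= ?cP1 ?cQ1 ?cQ2 | by rewrite /f /= hcol ?cP1 ?cQ1 ?cQ2]).
  by exists f.
exfalso.
have noP4 c1 c2 P Q : c1 != c2 -> P \in R c1 -> Q \in R c1 -> Q \in R c2 -> adj P c2.
  move=> h1 h2 h3 h4; case: (boolP (adj P c2)) => // h5; move/negP: H; case.
  apply/existsP; exists c1; apply/existsP; exists c2; apply/existsP; exists P; apply/existsP; exists Q.
  by rewrite h1 h2 h3 h4 h5.
pose S c := [set c' | [exists Q, (Q \in R c) && (Q \in R c')]].
have subR c : R c \subset [set i | [forall c' in S c, adj i c']].
  apply/subsetP => i hi; rewrite inE; apply/forall_inP => c'; rewrite inE => /existsP [Q /andP[hQ hQ']].
  case: (eqVneq c c') => [<-|hne]; first by move: hi; rewrite inE => /andP[].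
  exact: noP4 hne hi hQ hQ'.
have hSc c : #|S c| < K.
  rewrite ltnNge; apply/negP => /hS h.
  by have := leq_trans (hR c) (subset_leq_card (subR c)); rewrite leqNgt h.
have hA i : #|[set c | i \in R c]| <= K.-1.
  case: (set_0Vmem [set c | i \in R c]) => [->|[c hc]]; first by rewrite cards0.
  have : [set c | i \in R c] \subset S c.
    apply/subsetP => c' hc'; rewrite inE; apply/existsP; exists i.
    by move: hc hc'; rewrite !inE => -> ->.
  move/subset_leq_card => h; have := hSc c; lia.
have E : \sum_c #|R c| = \sum_i #|[set c | i \in R c]|.
  rewrite (eq_bigr (fun c => \sum_i (i \in R c))); last by move=> c _; rewrite card_sumB.
  rewrite exchange_big /=; apply: eq_bigr => i _; rewrite card_sumB; apply: eq_bigr => c _.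
  by rewrite inE.
have h1 : m * r <= \sum_c #|R c|.
  have -> : m * r = \sum_(c : 'I_m) r by rewrite sum_nat_const card_ord.
  by apply: leq_sum => c _; apply: hR.
have h2 : \sum_i #|[set c | i \in R c]| <= N * K.-1.
  have -> : N * K.-1 = \sum_(i : 'I_N) K.-1 by rewrite sum_nat_const card_ord.
  by apply: leq_sum => i _; apply: hA.
move: hNK; rewrite ltnNge; move/negP; apply.
by rewrite -E in h2; exact: leq_trans h1 h2.
Qed.


Lemma arrow_2K2 N m (adj : 'I_N -> 'I_m -> bool) n r K :
  0 < m ->
  (forall c, n + r - 1 <= #|[set i | adj i c]|) ->
  (forall S : {set 'I_m}, K <= #|S| -> #|[set i | [forall c in S, adj i c]]| < r) ->
  2 * K < m + 3 ->
  ind_arrow (be adj) twoK2 (K1n n).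
Proof.
move=> m0 hdeg hS hK col hcol.
pose R (c : 'I_m) := [set i : 'I_N | adj i c && col (inl i) (inr c)].
case: (boolP [exists c, n <= #|[set i | adj i c && ~~ col (inl i) (inr c)]|]) => [/existsP[c hc]|hno].
  by right; exact: star_copy hcol hc.
have hR c : r <= #|R c|.
  apply: red_large (hdeg c) _; move/existsPn: hno => /(_ c); by rewrite ltnNge.
case: (boolP [exists c1, exists c2, exists P, exists Q,
   [&& P \in R c1, Q \in R c2, ~~ adj P c2 & ~~ adj Q c1]]) => [H|H].
  left; move: H => /existsP[c1 /existsP[c2 /existsP[P /existsP[Q]]]].
  rewrite !inE => /and4P[/andP[aP1 cP1] /andP[aQ2 cQ2] nP2 nQ1].
  pose f (x : 'I_4) : ('I_N + 'I_m)%type :=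
    match val x with 0 => inr c1 | 1 => inl P | 2 => inr c2 | _ => inl Q end.
  have hPQ : P != Q by apply: contraNneq nQ1 => <-.
  have hne : c1 != c2 by apply: contraNneq nP2 => <-.
  have i1 : injective f.
    move=> [[|[|[|[|x]]]] hx] [[|[|[|[|y]]]] hy] //.
    all: rewrite /f /=.
    all: try (move=> H; first [by apply: val_inj | by case: H | by case: H => H; subst; rewrite ?eqxx in hne hPQ]).
  have i2 : forall x y, be adj (f x) (f y) = twoK2 x y.
    move=> [[|[|[|[|x]]]] hx] [[|[|[|[|y]]]] hy] //.
    all: try by rewrite /f /twoK2 /= ?aP1 ?aQ2 ?(negbTE nP2) ?(negbTE nQ1).
  have i3 : forall x y, twoK2 x y -> col (f x) (f y) = true.
    move=> [[|[|[|[|x]]]] hx] [[|[|[|[|y]]]] hy] //= _.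
    all: try (first [by rewrite /f /= ?cP1 ?cQ2 | by rewrite /f /= hcol ?cP1 ?cQ2]).
  by exists f.
exfalso.
have no2 c1 c2 P Q : P \in R c1 -> Q \in R c2 -> ~~ adj P c2 -> adj Q c1.
  move=> h1 h2 h3; case: (boolP (adj Q c1)) => // h4; move/negP: H; case.
  apply/existsP; exists c1; apply/existsP; exists c2; apply/existsP; exists P; apply/existsP; exists Q.
  by rewrite h1 h2 h3 h4.
pose U c := [set c' | [exists P, (P \in R c) && ~~ adj P c']].
have subR c : R c \subset [set i | [forall c' in ~: U c, adj i c']].
  apply/subsetP => i hi; rewrite inE; apply/forall_inP => c'; rewrite !inE => /existsPn /(_ i).
  by rewrite hi /= negbK.
have hU c : m - K + 1 <= #|U c|.
  have : #|~: U c| < K.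
    rewrite ltnNge; apply/negP => /hS h.
    by have := leq_trans (hR c) (subset_leq_card (subR c)); rewrite leqNgt h.
  have := cardsC (U c); rewrite card_ord; lia.
have anti c c' : c' \in U c -> c \in U c' -> False.
  rewrite !inE => /existsP[P /andP[hP nP]] /existsP[Q /andP[hQ nQ]].
  by have := no2 _ _ _ _ hP hQ nP; rewrite (negbTE nQ).
have irr c : c \notin U c.
  rewrite inE; apply/existsPn => P; rewrite inE negb_and negbK; case: (adj P c); by rewrite ?orbT.
have E1 : \sum_c \sum_c' ((c' \in U c) + (c \in U c')) = 2 * \sum_c #|U c|.
  rewrite (eq_bigr (fun c => \sum_c' (c' \in U c) + \sum_c' (c \in U c'))); last first.
    by move=> c _; rewrite big_split.
  have e1 : \sum_c \sum_c' (c' \in U c) = \sum_c #|U c|.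
    by apply: eq_bigr => c _; rewrite card_sumB.
  have e2 : \sum_c \sum_c' (c \in U c') = \sum_c #|U c|.
    by rewrite exchange_big; apply: eq_bigr => c _; rewrite card_sumB.
  by rewrite big_split /= e1 e2 mul2n addnn.
have E2 : \sum_c \sum_c' ((c' \in U c) + (c \in U c')) <= m * m.-1.
  have -> : m * m.-1 = \sum_(c : 'I_m) m.-1 by rewrite sum_nat_const card_ord.
  apply: leq_sum => c _.
  have -> : m.-1 = \sum_c' (c' \in [set~ c]) by rewrite -card_sumB cardsC1 card_ord.
  apply: leq_sum => c' _; rewrite in_setC1.
  case: (eqVneq c' c) => [->|hne]; first by rewrite (negbTE (irr c)).
  case h1: (c' \in U c); case h2: (c \in U c') => //.
  by exfalso; exact: anti h1 h2.
have E3 : m * (m - K + 1) <= \sum_c #|U c|.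
  have -> : m * (m - K + 1) = \sum_(c : 'I_m) (m - K + 1) by rewrite sum_nat_const card_ord.
  by apply: leq_sum => c _; apply: hU.
have : 2 * (m * (m - K + 1)) <= m * m.-1.
  by apply: leq_trans E2; rewrite E1 leq_mul2l E3 orbT.
rewrite mulnCA leq_pmul2l //; lia.
Qed.


Lemma exists_g N m d : N <= 'C(m, d) ->
  exists g : 'I_N -> {set 'I_m}, injective g /\ forall i, #|g i| = d.
Proof.
move=> hN.
pose D := [set A : {set 'I_m} | #|A| == d].
have hD : N <= #|D| by rewrite card_draws card_ord.
exists (fun i => enum_val (widen_ord hD i)); split.
  by move=> i j /enum_val_inj /(congr1 val) /= /val_inj.
by move=> i; have := enum_valP (widen_ord hD i); rewrite inE => /eqP.
Qed.

Lemma avoid_bound N m d (g : 'I_N -> {set 'I_m}) (S : {set 'I_m}) :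
  injective g -> (forall i, #|g i| = d) ->
  #|[set i | [forall c in S, c \notin g i]]| <= 'C(m - #|S|, d).
Proof.
move=> ginj gd.
set X := [set i | _].
rewrite -(card_imset _ ginj).
have -> : m - #|S| = #|~: S| by have := cardsC S; rewrite card_ord; lia.
rewrite -cards_draws; apply: subset_leq_card; apply/subsetP => A /imsetP[i hi ->].
rewrite inE gd eqxx andbT; apply/subsetP => c hc; rewrite inE.
move: hi; rewrite inE => /forall_inP h; apply/negP => cS.
by move: (h c cS); rewrite hc.
Qed.

Lemma deg_bound N m d (g : 'I_N -> {set 'I_m}) c :
  injective g -> (forall i, #|g i| = d) ->
  N - ('C(m, d) - 'C(m.-1, d)) <= #|[set i | c \notin g i]|.
Proof.
move=> ginj gd.
have h1 : #|[set i | c \in g i]| <= 'C(m, d) - 'C(m.-1, d).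
  rewrite -(card_imset _ ginj).
  have e1 := cardsID [set A : {set 'I_m} | c \in A] [set A : {set 'I_m} | #|A| == d].
  rewrite card_draws card_ord in e1.
  have e2 : [set A : {set 'I_m} | #|A| == d] :\: [set A : {set 'I_m} | c \in A] =
            [set A : {set 'I_m} | (A \subset [set~ c]) && (#|A| == d)].
    apply/setP => A; rewrite !inE; congr (_ && _).
    apply/idP/idP => [hc|/subsetP h].
      by apply/subsetP => x hx; rewrite !inE; apply/eqP => e; move: hc; rewrite -e hx.
    by apply/negP => /h; rewrite !inE eqxx.
  rewrite e2 cards_draws cardsC1 card_ord in e1.
  have : g @: [set i | c \in g i] \subset [set A : {set 'I_m} | #|A| == d] :&: [set A : {set 'I_m} | c \in A].
    by apply/subsetP => A /imsetP[i hi ->]; rewrite !inE gd eqxx; rewrite inE in hi.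
  move/subset_leq_card; lia.
have := cardsC [set i | c \in g i]; rewrite card_ord.
have -> : ~: [set i | c \in g i] = [set i | c \notin g i] by apply/setP => i; rewrite !inE.
lia.
Qed.

Lemma arrow_concrete n N m d r K :
  N <= 'C(m, d) -> n + r - 1 <= N - ('C(m, d) - 'C(m.-1, d)) ->
  'C(m - K, d) < r -> N * K.-1 < m * r -> 0 < m -> 2 * K < m + 3 ->
  exists (V : finType) (e : rel V), is_graph e /\ #|V| = N + m /\
    ind_arrow e P4 (K1n n) /\ ind_arrow e twoK2 (K1n n).
Proof.
move=> hN hdeg hK hNK m0 h2K.
have [g [ginj gd]] := exists_g hN.
pose adj (i : 'I_N) (c : 'I_m) := c \notin g i.
have hd c : n + r - 1 <= #|[set i | adj i c]| by apply: leq_trans hdeg (deg_bound c ginj gd).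
have hS (S : {set 'I_m}) : K <= #|S| -> #|[set i | [forall c in S, adj i c]]| < r.
  move=> hKS; apply: leq_ltn_trans (avoid_bound S ginj gd) _.
  by apply: leq_ltn_trans hK; apply: leq_bin2l; lia.
exists ('I_N + 'I_m)%type, (be adj); split; first exact: be_graph.
split; first by rewrite card_sum !card_ord.
split; first by apply: (arrow_P4 (r := r) (K := K)) => //; lia.
exact: (arrow_2K2 (r := r) (K := K)).
Qed.


Lemma pow_big x : 64 <= x -> 2 ^ 22 * x ^ 4 <= 2 ^ x.
Proof.
elim: x => [|x IH] hx; first by exfalso; move: hx; rewrite ltn0.
case: (ltngtP x 63) => hx'.
- by exfalso; move: hx; rewrite ltnS leqNgt hx'.
- have := IH hx' => h.
  have h2 : x.+1 ^ 4 <= 2 * x ^ 4.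
    have e1 : x.+1 ^ 4 = x.+1 * x.+1 * x.+1 * x.+1 by rewrite !expnS expn0; lia.
    have e2 : x ^ 4 = x * x * x * x by rewrite !expnS expn0; lia.
    rewrite e1 e2; nia.
  rewrite [2 ^ x.+1]expnS; apply: (leq_trans _ (leq_mul (leqnn 2) h)).
  by rewrite mulnCA leq_mul2l h2 orbT.
- rewrite hx' (_ : 64 = 2 ^ 6); last by [].
  by rewrite -expnM -expnD leq_exp2l.
Qed.

Lemma binom_up x k j : 'C(x, k) <= 'C(x + j, k + j).
Proof.
elim: j => [|j IH]; first by rewrite !addn0.
by rewrite !addnS binS; apply: leq_trans IH (leq_addl _ _).
Qed.

Lemma leq_expr m n e : m <= n -> m ^ e <= n ^ e.
Proof. by case: e => [|e] h; [rewrite !expn0 | rewrite leq_exp2r]. Qed.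

Lemma ffact_le_pow m d : m ^_ d <= m ^ d.
Proof.
elim: d m => [|d IH] m; first by rewrite ffactn0 expn0.
rewrite ffactnS expnS leq_mul2l; apply/orP; right.
by apply: leq_trans (IH _) _; apply: leq_expr; apply: leq_pred.
Qed.

Lemma bin_le_pow m d : 'C(m, d) <= m ^ d.
Proof.
apply: leq_trans (ffact_le_pow m d); rewrite -bin_ffact.
by apply: leq_pmulr; apply: fact_gt0.
Qed.

Lemma ratio m d i : i <= m -> 'C(m - i, d) * m ^ i <= 'C(m, d) * (m - d) ^ i.
Proof.
elim: i => [|i IH] hi; first by rewrite subn0 !expn0 !muln1.
have IH' := IH (ltnW hi).
set x := m - i.
have hx : 0 < x by rewrite /x subn_gt0.
have hxm : x <= m by rewrite /x leq_subr.
have e : m - i.+1 = x.-1 by rewrite /x subnS.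
have claim : 'C(x.-1, d) * m <= 'C(x, d) * (m - d).
  rewrite -(leq_pmul2l hx) mulnA mul_bin_down.
  have : (x - d) * m <= x * (m - d).
    case: (leqP d x) => h; last by rewrite (_ : x - d = 0) ?mul0n //; lia.
    nia.
  move=> h; set A := 'C(x, d).
  have := leq_mul (leqnn A) h; rewrite !mulnA; set u := m - d; set v := x - d.
  by rewrite [A * v]mulnC [A * x]mulnC -!mulnA [A * u]mulnC.
rewrite e expnS.
rewrite (mulnA (binomial x.-1 d) m (m ^ i)).
apply: (leq_trans (leq_mul claim (leqnn _))).
rewrite expnS; move: IH'; set A := 'C(x, d); set B := 'C(m, d); set w := m - d;
set M := m ^ i; set W := w ^ i => IH'.
have := leq_mul IH' (leqnn w).
by rewrite mulnAC [B * (w * W)]mulnCA [B * W * w]mulnC.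
Qed.

Lemma bern x y a : x ^ a + a * y * x ^ a.-1 <= (x + y) ^ a.
Proof.
elim: a => [|a IH]; first by rewrite !expn0 mul0n addn0.
rewrite [(x + y) ^ a.+1]expnS.
apply: leq_trans (leq_mul (leqnn (x + y)) IH).
case: a {IH} => [|a]; first by rewrite !expn0 !expn1 mul0n !addn0 muln1 mul1n muln1.
rewrite /= !expnS.
set z := x ^ a.
nia.
Qed.

Lemma two_pow m d a : d <= m -> m - d <= a * d -> 0 < a -> 2 * (m - d) ^ a <= m ^ a.
Proof.
move=> hdm h ha.
have := bern (m - d) d a; rewrite subnK //.
case: a ha h => [//|a] _ h /=.
rewrite !expnS /=; set z := (m - d) ^ a; set w := m - d.
move=> hb; apply: leq_trans hb; nia.
Qed.


Lemma params n P : 520 <= P -> 2 ^ (P.-1 ^ 4) <= n -> n < 2 ^ (P ^ 4) ->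
  exists N m d r K, N <= 'C(m, d) /\ n + r - 1 <= N - ('C(m, d) - 'C(m.-1, d)) /\
    'C(m - K, d) < r /\ N * K.-1 < m * r /\ 0 < m /\ 2 * K < m + 3
    /\ n <= N + m /\ P * (N + m - n) <= 2 * n.
Proof.
move=> hP hlo hhi.
have e4 y : y ^ 4 = y * y * y * y by rewrite !expnS expn0 muln1 !mulnA.
have e3 y : y ^ 3 = y * y * y by rewrite !expnS expn0 muln1 !mulnA.
set Q := P.-1 ^ 4.
have hQ64 : 64 <= Q by rewrite /Q e4; nia.
have hQP : P <= Q by rewrite /Q e4; nia.
have hnbig : 2 ^ 22 * P ^ 4 <= n.
  apply: leq_trans hlo; apply: leq_trans (pow_big hQ64).
  by rewrite leq_mul2l leq_expr ?orbT.
have hn1 : 1024 * P ^ 2 <= n by nia.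
set d := 8 * P ^ 3.
have hd0 : 0 < d by rewrite /d e3; nia.
have hex : exists m, 2 * n <= 'C(m, d).
  exists (2 * n + d); apply: leq_trans (_ : 'C(2 * n + 1, 1) <= _).
    by rewrite bin1 addn1.
  have := binom_up (2 * n + 1) 1 d.-1.
  by rewrite -addnA !add1n prednK.
set m := ex_minn hex.
have hm : 2 * n <= 'C(m, d) by rewrite /m; case: ex_minnP.
have hmin k : 2 * n <= 'C(k, d) -> m <= k by rewrite /m; case: ex_minnP => x _; apply.
have hm0 : 0 < m.
  case: (posnP m) => // h; move: hm; rewrite h bin0n; case: (d == 0) => /=; nia.
have hm1 : 'C(m.-1, d) < 2 * n.
  rewrite ltnNge; apply/negP => /hmin; rewrite -(prednK hm0) ltnn //.
set j := (P - 4) %/ 8.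
have hj64 : 64 <= j by rewrite /j leq_divRL //; lia.
have hj8 : j * 8 <= P - 4 by apply: leq_trunc_div.
have hjd : j * d <= Q.
  have h1 : j * d <= (P - 4) * P ^ 3 by rewrite /d mulnA leq_mul2r hj8 orbT.
  apply: leq_trans h1 _; rewrite /Q e3 e4.
  have [k ->] : exists k, P = k + 4 by exists (P - 4); rewrite subnK //; lia.
  rewrite addnK (_ : (k + 4).-1 = k + 3); last by rewrite addnS.
  nia.
have hmj : 2 ^ j <= m.
  rewrite leqNgt; apply/negP => h.
  have h1 : m ^ d < (2 ^ j) ^ d by rewrite ltn_exp2r.
  have h2 : (2 ^ j) ^ d <= 2 ^ Q by rewrite -expnM leq_exp2l.
  have hc : 'C(m, d) < n := leq_ltn_trans (bin_le_pow m d) (leq_trans h1 (leq_trans h2 hlo)).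
  move: hm hc; set C := 'C(m, d); lia.
have hPj : P <= 16 * j.
  have := ltn_ceil (P - 4) (isT : 0 < 8); rewrite -/j; lia.
have hm64 : 64 * P ^ 4 <= m.
  apply: leq_trans hmj; apply: leq_trans (pow_big hj64).
  have := leq_expr 4 hPj; rewrite expnMn => h.
  nia.
have hP34 : P ^ 3 <= P ^ 4 by rewrite leq_pexp2l //; lia.
have hmd : 2 * d <= m by rewrite /d; lia.
have hdm : d <= m by lia.
have hb := mul_bin_down m d.
have hC4 : 'C(m, d) < 4 * n.
  move: hb hm1; set A := 'C(m, d); set B := 'C(m.-1, d) => hb hm1.
  have h1 : m * A <= 2 * ((m - d) * A) by rewrite mulnA leq_mul2r; apply/orP; right; lia.
  have h2 : m * B < m * (2 * n) by rewrite ltn_pmul2l.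
  rewrite -(ltn_pmul2l hm0); lia.
have hT : ('C(m, d) - 'C(m.-1, d)) * m = 'C(m, d) * d.
  move: hb; set A := 'C(m, d); set B := 'C(m.-1, d) => hb.
  rewrite mulnBl [B * m]mulnC hb mulnBl [A * m]mulnC.
  have : d * A <= m * A by rewrite leq_mul2r hdm orbT.
  lia.
have hw : (m - d) * (m - d) <= 4 * n.
  have hd2 : 2 <= d by lia.
  have := binom_up (m - d + 1) 2 (d - 2).
  rewrite (_ : m - d + 1 + (d - 2) = m.-1); last by lia.
  rewrite (_ : 2 + (d - 2) = d); last by lia.
  rewrite bin2 (_ : (m - d + 1).-1 = m - d); last by lia.
  move=> h; have := leq_ltn_trans h hm1; set w := m - d => h'.
  have : w * w <= (w + 1) * w by rewrite leq_mul2r leq_addr orbT.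
  lia.
have hPm : 8 * P * m <= n.
  have e : m = (m - d) + d by rewrite subnK.
  set w := m - d in hw e.
  have h1 : 8 * P * d = 64 * P ^ 4 by rewrite /d e3 e4; nia.
  have h2 : 16 * P * w <= n.
    rewrite leqNgt; apply/negP => h.
    have h3 : n * n < (16 * P * w) * (16 * P * w) by apply: ltn_mul.
    have h4 : (16 * P * w) * (16 * P * w) = 256 * P ^ 2 * (w * w).
      by rewrite (_ : P ^ 2 = P * P); [nia | rewrite !expnS expn0 muln1].
    have h5 : P ^ 2 * (w * w) <= P ^ 2 * (4 * n) by rewrite leq_mul2l hw orbT.
    have h6 : 1024 * P ^ 2 * n <= n * n by rewrite leq_mul2r hn1 orbT.
    lia.
  rewrite e mulnDr h1; lia.
have h3 : 32 * P ^ 2 <= 2 ^ P.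
  have h64 : 64 <= P by lia.
  apply: leq_trans (pow_big h64); have : P ^ 2 <= P ^ 4 by rewrite leq_pexp2l //; lia.
  lia.
have h4d : 4 * d <= P * 2 ^ P.
  have : P * (32 * P ^ 2) <= P * 2 ^ P by rewrite leq_mul2l h3 orbT.
  by rewrite /d e3 (_ : P ^ 2 = P * P); [nia | rewrite !expnS expn0 muln1].
set a := m %/ d + 1.
have ha1 : m < a * d by rewrite /a addn1; apply: ltn_ceil.
have ha2 : a * d <= m + d by rewrite /a mulnDl mul1n leq_add2r leq_trunc_div.
have ha0 : 0 < a by rewrite /a addn1.
set K := P * a.
have hKd : K * d <= P * (m + d) by rewrite /K -mulnA leq_mul2l ha2 orbT.
have hKd2 : P * m <= K * d by rewrite /K -mulnA leq_mul2l (ltnW ha1) orbT.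
have hK8 : 8 * P ^ 2 * K <= m + 8 * P ^ 3.
  have hP0 : 0 < P by lia.
  rewrite -(leq_pmul2l hP0); move: hKd; rewrite /d.
  rewrite (_ : P ^ 3 = P * P ^ 2); last by rewrite (expnS P 2).
  set Y := P ^ 2; move=> h; apply: leq_trans h; rewrite leq_eqVlt; apply/orP; left; apply/eqP.
  nia.
have hK3 : 2 * K < m + 3.
  rewrite ltnNge; apply/negP => h.
  have h5 : 4 * (m + 3) <= 8 * K by lia.
  have h5' := leq_mul (leqnn (P ^ 2)) h5.
  have hP2 : 8 <= P ^ 2.
    by rewrite (_ : P ^ 2 = P * P); [clear -hP; nia | rewrite !expnS expn0 muln1].
  have f3 : 8 * m <= P ^ 2 * m by rewrite leq_mul2r hP2 orbT.
  have f2 : P ^ 3 <= m by lia.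
  clear -h5' hK8 f3 f2 hm0; move: h5' hK8 f3 f2; set X := P ^ 2; set Y := P ^ 3 => h5' hK8 f3 f2.
  nia.
have hKm : K <= m by lia.
set r := (3 * n * K) %/ m + 1.
have hr1 : 3 * n * K < r * m by rewrite /r addn1; apply: ltn_ceil.
have hr2 : r * m <= 3 * n * K + m by rewrite /r mulnDl mul1n leq_add2r leq_trunc_div.
have hr0 : 0 < r by rewrite /r addn1.
set T := 'C(m, d) - 'C(m.-1, d).
have hPT : 2 * P * T < n.
  rewrite -(ltn_pmul2r hm0).
  have e1 : 2 * P * T * m = 2 * P * ('C(m, d) * d) by rewrite -hT mulnA.
  rewrite e1.
  have h1 : 2 * P * ('C(m, d) * d) < 2 * P * (4 * n * d).
    rewrite ltn_pmul2l ?ltn_pmul2r //; clear -hP; lia.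
  apply: (leq_trans h1).
  have e2 : 2 * P * (4 * n * d) = n * (64 * P ^ 4).
    by rewrite /d e3 e4; clear; nia.
  by rewrite e2 leq_mul2l hm64 orbT.
have hrP : 8 * P ^ 2 * r <= 6 * n + 8 * P ^ 2.
  have hP2 : 0 < P ^ 2 by rewrite expn_gt0; apply/orP; left; clear -hP; lia.
  have hP0 : 0 < P by clear -hP; lia.
  have hmd0 : 0 < m * (P * d) := ltn_mul hm0 (ltn_mul hP0 hd0).
  rewrite -(leq_pmul2r hmd0).
  have s1 : r * m * (P * d) <= (3 * n * K + m) * (P * d) by rewrite leq_mul2r hr2 orbT.
  have s2 : 3 * n * K * (P * d) <= 3 * n * P * (P * (m + d)).
    have := leq_mul (leqnn (3 * n * P)) hKd; clear; nia.
  have s3 : 3 * n * P * (P * (m + d)) <= 6 * n * P ^ 2 * m.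
    rewrite (_ : P ^ 2 = P * P); last by rewrite !expnS expn0 muln1.
    have : m + d <= 2 * m by clear -hdm; lia.
    clear; nia.
  have e5 : 8 * P ^ 2 * r * (m * (P * d)) = (r * m * (P * d)) * (8 * P ^ 2) by clear; nia.
  have e6 : (6 * n + 8 * P ^ 2) * (m * (P * d)) = (6 * n * P ^ 2 * m + m * (P * d)) * (8 * P ^ 2) - 0.
    by rewrite subn0 /d e3; rewrite (_ : P ^ 2 = P * P); [clear; nia | rewrite !expnS expn0 muln1].
  rewrite e5 e6 subn0 leq_mul2r; apply/orP; right.
  move: s1 s2 s3; clear; lia.
have hPr : 600 * (P * r) <= n.
  have f1 : 520 * (P * r) <= P * (P * r) by rewrite leq_mul2r hP orbT.
  have e : P ^ 2 * r = P * (P * r) by rewrite mulnA (_ : P ^ 2 = P * P) // !expnS expn0 muln1.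
  move: hrP f1 e hn1; clear; lia.
have hrT : r + T <= n.
  have f1 : 520 * r <= P * r by rewrite leq_mul2r hP orbT.
  have f2 : 1040 * T <= 2 * P * T by rewrite leq_mul2r; apply/orP; right; clear -hP; lia.
  move: f1 f2 hPr hPT; clear; lia.
have hX : 'C(m - K, d) < r.
  have hrat := @ratio m d K hKm.
  have htp : 2 * (m - d) ^ a <= m ^ a.
    by apply: two_pow => //; move: ha1; clear; lia.
  have hpow : 2 ^ P * (m - d) ^ K <= m ^ K.
    by rewrite /K (mulnC P a) !expnM -expnMn leq_expr.
  move: hrat; set X := 'C(m - K, d) => hrat.
  have hw0 : 0 < (m - d) ^ K by rewrite expn_gt0 subn_gt0; apply/orP; left; move: hmd hd0; clear; lia.
  have hX1 : X * 2 ^ P < 4 * n.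
    rewrite -(ltn_pmul2r hw0) -mulnA.
    apply: leq_ltn_trans (leq_mul (leqnn X) hpow) _.
    apply: leq_ltn_trans hrat _.
    by rewrite ltn_pmul2r.
  have hX2 : X * m <= n * K.
    have hd4 : 0 < 4 * d by move: hd0; clear; lia.
    rewrite -(leq_pmul2r hd4).
    have t1 : X * m * (4 * d) <= X * m * (P * 2 ^ P) by rewrite leq_mul2l h4d orbT.
    have t2 : X * m * (P * 2 ^ P) = (X * 2 ^ P) * (P * m) by clear; nia.
    have t3 : (X * 2 ^ P) * (P * m) <= (X * 2 ^ P) * (K * d) by rewrite leq_mul2l hKd2 orbT.
    have t4 : (X * 2 ^ P) * (K * d) <= (4 * n) * (K * d) by rewrite leq_mul2r (ltnW hX1) orbT.
    have t5 : (4 * n) * (K * d) = n * K * (4 * d) by clear; nia.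
    by rewrite -t5; apply: leq_trans t4; apply: leq_trans t3; rewrite -t2.
  have : X * m < r * m.
    apply: leq_ltn_trans hX2 _; apply: (leq_ltn_trans _ hr1); clear; nia.
  by rewrite ltn_pmul2r.
set N := n + r + T - 1.
have hN2 : N <= 2 * n by rewrite /N; move: hrT; clear; lia.
exists N, m, d, r, K; split; [|split; [|split; [|split; [|split; [|split; [|split]]]]]].
- exact: leq_trans hN2 hm.
- rewrite /N /T; move: hr0; clear; lia.
- exact: hX.
- have h1 : N * K.-1 <= 2 * n * K by apply: leq_mul => //; apply: leq_pred.
  have h2 : 2 * n * K <= 3 * n * K by rewrite leq_mul2r leq_mul2r leqnSn !orbT.
  apply: (leq_ltn_trans h1); apply: (leq_ltn_trans h2); by rewrite (mulnC m r).
- exact: hm0.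
- exact: hK3.
- rewrite /N; move: hr0; clear; lia.
- have h1 : P * (N + m - n) <= P * (r + T + m) by rewrite leq_mul2l; apply/orP; right; rewrite /N; clear; lia.
  apply: leq_trans h1 _; rewrite !mulnDr.
  move: hPr hPT hPm; clear; lia.
Qed.


Lemma main_aux n : 2 ^ (520 ^ 4) < n ->
  IR_le P4 (K1n n) (star_bound n) /\ IR_le twoK2 (K1n n) (star_bound n).
Proof.
move=> hn.
have hex : exists P, n < 2 ^ (P ^ 4).
  exists n; apply: leq_trans (ltn_expl n (isT : 1 < 2)) _.
  rewrite leq_exp2l //; case: n {hn} => [//|n].
  by rewrite -{1}(expn1 n.+1) leq_pexp2l.
set P := ex_minn hex.
have hhi : n < 2 ^ (P ^ 4) by rewrite /P; case: ex_minnP.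
have hmin k : n < 2 ^ (k ^ 4) -> P <= k by rewrite /P; case: ex_minnP => x _; apply.
have hP : 520 <= P.
  rewrite leqNgt; apply/negP => h.
  have h1 : P ^ 4 <= 520 ^ 4 by apply: leq_expr; apply: ltnW.
  have h2 : 2 ^ (P ^ 4) <= 2 ^ (520 ^ 4).
    rewrite leq_exp2l; last by []. exact: h1.
  by have := leq_ltn_trans h2 hn; rewrite ltnNge (ltnW hhi).
have hn2 : 2 <= n.
  have h520 : 0 < 520 ^ 4 by rewrite expn_gt0.
  have h : 2 ^ 1 <= 2 ^ (520 ^ 4).
    rewrite leq_exp2l; last by []. exact: h520.
  exact: leq_trans h (ltnW hn).
clear hn.
have hlo : 2 ^ (P.-1 ^ 4) <= n.
  rewrite leqNgt; apply/negP => /hmin h; move: h.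
  by rewrite -{1}(prednK (leq_trans (isT : 0 < 520) hP)) ltnn.
have [N [m [d [r [K [h1 [h2 [h3 [h4 [h5 [h6 [h7 h8]]]]]]]]]]]] := params hP hlo hhi.
have [V [e [he [hV [hP4 h2K2]]]]] := arrow_concrete h1 h2 h3 h4 h5 h6.
have hb : Rle (INR #|V|) (star_bound n).
  rewrite hV; apply: (real_bound hn2 hhi) => //.
  by apply: leq_trans (isT : 0 < 520) hP.
by split; exists V, e.
Qed.


Theorem lemma5 : exists n0 : nat, forall n : nat, (n0 < n)%nat ->
  IR_le P4 (K1n n) (star_bound n) /\ IR_le twoK2 (K1n n) (star_bound n).
Proof.
exists (2 ^ (520 ^ 4)) => n hn.
exact: main_aux hn.
Qed.
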